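(* Let $\Gamma\subset\mathbb{R}^n$ be a closed $d$-Ahlfors regular set with $d<n-1$, $\Omega=\mathbb{R}^n\setminus\Gamma$, and let $0<\alpha<\alpha'$. Let $u\in W_r(\Omega)$ and suppose $S^{\alpha'}u(q)<\infty$ for $\sigma$-almost every $q\in\Gamma$. Then for every $\lambda>0$ the set $\{q\in\Gamma:S^{\alpha}u(q)>\lambda\}$ is (relatively) open in $\Gamma$.
   Context: $d$-Ahlfors regular: there is $C_0\ge1$ with $C_0^{-1}r^d\le\mathcal{H}^d(B(q,r)\cap\Gamma)\le C_0r^d$. $\delta(X)=\operatorname{dist}(X,\Gamma)$, $\sigma=\mathcal{H}^d|_\Gamma$, $dm(X)=\delta(X)^{d-n+1}dX$, $W_r(\Omega)=\{u\in L^1_{loc}(\Omega):\nabla u\in L^2_{loc}(\Omega,dm)\}$. For $a>0$, $\Gamma^a(q)=\{X\in\Omega:|X-q|<(1+a)\delta(X)\}$ and $S^au(q)=\big(\iint_{\Gamma^a(q)}|\nabla u(X)|^2\delta(X)^{1-d}dm(X)\big)^{1/2}$. *)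

(* Defs.v *)
From HB Require Import structures.
From mathcomp Require Import all_boot all_order all_algebra.
From mathcomp Require Import all_classical all_reals all_analysis.
Set Implicit Arguments. Unset Strict Implicit. Unset Printing Implicit Defensive.
Import Order.TTheory GRing.Theory Num.Theory.
Import numFieldNormedType.Exports.
Local Open Scope classical_set_scope.
Local Open Scope ring_scope.

Section Defs.
Variables (R : realType) (n : nat).

(* Points of R^n are row vectors 'rV[R]_n (its library topology is the
   usual one on R^n).  Distances are Euclidean. *)
Definition enorm (x : 'rV[R]_n) : R := Num.sqrt (\sum_(i < n) x 0 i ^+ 2).

Definition eball (q : 'rV[R]_n) (r : R) : set 'rV[R]_n :=
  [set X | enorm (X - q) < r].

Definition distG (G : set 'rV[R]_n) (X : 'rV[R]_n) : R :=
  inf [set enorm (X - y) | y in G].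

Definition ediam (E : set 'rV[R]_n) : R :=
  sup [set enorm (x - y) | x in E & y in E].

(* d-dimensional Hausdorff (outer) measure, unnormalized:
   H^d(A) = sup_{eps>0} inf { sum_k diam(E_k)^d :
                A ⊆ ⋃_k E_k, diam(E_k) <= eps } *)
Definition hcontrib (d : R) (E : set 'rV[R]_n) : R :=
  if E == set0 then 0 else powR (ediam E) d.

Definition hausdorff_eps (d eps : R) (A : set 'rV[R]_n) : \bar R :=
  ereal_inf [set s : \bar R | exists E : nat -> set 'rV[R]_n,
    [/\ A `<=` \bigcup_k E k,
        (forall k x y, E k x -> E k y -> enorm (x - y) <= eps) &
        s = (\sum_(0 <= k <oo) (hcontrib d (E k))%:E)%E]].

Definition hausdorff (d : R) (A : set 'rV[R]_n) : \bar R :=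
  ereal_sup [set hausdorff_eps d eps A | eps in [set e : R | 0 < e]].

Definition ahlfors_regular (d : R) (G : set 'rV[R]_n) : Prop :=
  closed G /\
  exists C0 : R, 1 <= C0 /\
    forall q r, G q -> 0 < r ->
      ((C0^-1 * powR r d)%:E <= hausdorff d (eball q r `&` G))%E /\
      (hausdorff d (eball q r `&` G) <= (C0 * powR r d)%:E)%E.

Definition BorelRn : Type := g_sigma_algebraType (@open 'rV[R]_n).

Definition box (a b : 'rV[R]_n) : set 'rV[R]_n :=
  [set x | forall i, a 0 i <= x 0 i < b 0 i].

(* mu is (the Borel restriction of) n-dimensional Lebesgue measure:
   it gives every box its volume (this determines it uniquely). *)
Definition is_lebesgue_Rn (mu : {measure set BorelRn -> \bar R}) : Prop :=
  forall a b : 'rV[R]_n, (forall i, a 0 i <= b 0 i) ->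
    mu (box a b : set BorelRn) = (\prod_(i < n) (b 0 i - a 0 i))%:E.

Definition ebasis (i : 'I_n) : 'rV[R]_n := delta_mx 0 i.
Definition partial (i : 'I_n) (f : 'rV[R]_n -> R) : 'rV[R]_n -> R :=
  fun x => 'D_(ebasis i) f x.

Fixpoint Ck (k : nat) (f : 'rV[R]_n -> R) : Prop :=
  match k with
  | 0 => continuous f
  | k'.+1 => (forall i x, derivable f x (ebasis i)) /\
             (forall i, Ck k' (partial i f))
  end.

Definition smooth (f : 'rV[R]_n -> R) : Prop := forall k, Ck k f.

Definition test_fun (O : set 'rV[R]_n) (phi : 'rV[R]_n -> R) : Prop :=
  smooth phi /\ exists K, [/\ compact K, K `<=` O & forall x, ~ K x -> phi x = 0].

Definition Omega (G : set 'rV[R]_n) : set 'rV[R]_n := ~` G.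

Definition L1loc (mu : {measure set BorelRn -> \bar R}) (O : set 'rV[R]_n)
  (u : 'rV[R]_n -> R) : Prop :=
  measurable_fun (O : set BorelRn) (u : BorelRn -> R) /\
  forall K : set 'rV[R]_n, compact K -> K `<=` O ->
    (\int[mu]_(x in (K : set BorelRn)) `|(u x)%:E| < +oo)%E.

Definition weak_gradient (mu : {measure set BorelRn -> \bar R})
  (O : set 'rV[R]_n) (u : 'rV[R]_n -> R) (g : 'rV[R]_n -> 'rV[R]_n) : Prop :=
  forall phi, test_fun O phi -> forall i : 'I_n,
    (\int[mu]_(x in (O : set BorelRn)) (u x * partial i phi x)%:E =
     - \int[mu]_(x in (O : set BorelRn)) (g x 0 i * phi x)%:E)%E.

Definition enorm2 (v : 'rV[R]_n) : R := \sum_(i < n) v 0 i ^+ 2.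

(* density of dm = delta^{d-n+1} dX *)
Definition wdens (d : R) (G : set 'rV[R]_n) (X : 'rV[R]_n) : R :=
  powR (distG G X) (d - n%:R + 1).

Definition in_Wr (mu : {measure set BorelRn -> \bar R}) (d : R)
  (G : set 'rV[R]_n) (u : 'rV[R]_n -> R) (g : 'rV[R]_n -> 'rV[R]_n) : Prop :=
  L1loc mu (Omega G) u /\
  (forall i : 'I_n, measurable_fun (Omega G : set BorelRn)
                        ((fun x => g x 0 i) : BorelRn -> R)) /\
  weak_gradient mu (Omega G) u g /\
  forall K : set 'rV[R]_n, compact K -> K `<=` Omega G ->
    (\int[mu]_(x in (K : set BorelRn)) (enorm2 (g x) * wdens d G x)%:E < +oo)%E.

Definition cone (G : set 'rV[R]_n) (a : R) (q : 'rV[R]_n) : set 'rV[R]_n :=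
  [set X | Omega G X /\ enorm (X - q) < (1 + a) * distG G X].

Definition sqfun (mu : {measure set BorelRn -> \bar R}) (d : R)
  (G : set 'rV[R]_n) (g : 'rV[R]_n -> 'rV[R]_n) (a : R) (q : 'rV[R]_n)
  : \bar R :=
  poweR (\int[mu]_(X in (cone G a q : set BorelRn))
           (enorm2 (g X) * powR (distG G X) (1 - d) * wdens d G X)%:E)
        (2^-1).

End Defs.

(* Main.v *)
Require Import Defs.
From HB Require Import structures.
From mathcomp Require Import all_boot all_order all_algebra.
From mathcomp Require Import all_classical all_reals all_analysis.
From mathcomp Require Import measurable_realfun.
From mathcomp Require Import ring lra.
Import Order.TTheory GRing.Theory Num.Theory.
Import numFieldNormedType.Exports.
Import HBNNSimple.
Local Open Scope classical_set_scope.
Local Open Scope ring_scope.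

Section Alg.
Variables (R : realType) (n : nat).
Implicit Types (u v : 'rV[R]_n).

Lemma enorm_ge0 v : 0 <= enorm v.
Proof. exact: sqrtr_ge0. Qed.

Lemma sumsq_ge0 v : 0 <= \sum_(i < n) v 0 i ^+ 2.
Proof. by apply: sumr_ge0 => i _; exact: sqr_ge0. Qed.

Lemma enormN v : enorm (- v) = enorm v.
Proof. by rewrite /enorm; congr Num.sqrt; apply: eq_bigr => i _; rewrite mxE sqrrN. Qed.

Lemma enormB u v : enorm (u - v) = enorm (v - u).
Proof. by rewrite -enormN opprB. Qed.

Lemma enorm_sq v : enorm v ^+ 2 = \sum_(i < n) v 0 i ^+ 2.
Proof. by rewrite sqr_sqrtr // sumsq_ge0. Qed.

Lemma cs u v : \sum_(i < n) u 0 i * v 0 i <= enorm u * enorm v.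
Proof.
set s := enorm u; set t := enorm v.
have s0 : 0 <= s by exact: enorm_ge0.
have t0 : 0 <= t by exact: enorm_ge0.
have key : (s * t) * (\sum_(i < n) u 0 i * v 0 i) <= (s * t) * (s * t).
  have e1 : (s * t) * (s * t) = 2^-1 * (t ^+ 2 * s ^+ 2 + s ^+ 2 * t ^+ 2).
    by field.
  rewrite e1 {2}/s {3}/t !enorm_sq mulr_sumr !mulr_sumr -big_split /=.
  rewrite mulr_sumr; apply: ler_sum => i _.
  have := sqr_ge0 (t * u 0 i - s * v 0 i).
  set a := u 0 i; set b := v 0 i => H.
  rewrite -!enorm_sq -/s -/t; nra.
have [st0|st0] := eqVneq (s * t) 0.
  have : s = 0 \/ t = 0.
    by move/eqP: st0; rewrite mulf_eq0 => /orP[/eqP|/eqP]; [left|right].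
  have z (w : 'rV[R]_n) : enorm w = 0 -> forall i, w 0 i = 0.
    move=> /(congr1 (fun x => x ^+ 2)); rewrite enorm_sq expr0n /=.
    move=> /eqP; rewrite psumr_eq0; last by move=> i _; exact: sqr_ge0.
    by move=> /allP H i; apply/eqP; rewrite -sqrf_eq0; apply: H; rewrite mem_index_enum.
  case=> [/z H|/z H]; rewrite st0 big1 // => i _; by rewrite H ?mul0r ?mulr0.
have stp : 0 < s * t by rewrite lt_def st0 mulr_ge0.
by rewrite -(ler_pM2l stp).
Qed.

Lemma enormD u v : enorm (u + v) <= enorm u + enorm v.
Proof.
suff H : \sum_(i < n) (u + v) 0 i ^+ 2 <= (enorm u + enorm v) ^+ 2.
  apply: le_trans (ler_wsqrtr H) _.
  by rewrite sqrtr_sqr ger0_norm ?addr_ge0 ?enorm_ge0.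
rewrite sqrrD !enorm_sq.
have -> : \sum_(i < n) (u + v) 0 i ^+ 2 =
   \sum_(i < n) u 0 i ^+ 2 + (\sum_(i < n) u 0 i * v 0 i) *+ 2 + \sum_(i < n) v 0 i ^+ 2.
  rewrite -sumrMnl -!big_split /=; apply: eq_bigr => i _; rewrite mxE; exact: sqrrD.
have := cs u v; set S := \sum_(i < n) _; move=> H.
lra.
Qed.

Lemma enorm_near (X : 'rV[R]_n) (e : R) : 0 < e ->
  \forall Y \near X, enorm (Y - X) < e.
Proof.
move=> e0.
pose del := e / (n%:R + 1).
have del0 : 0 < del by rewrite divr_gt0 // ltr_wpDl.
have : \forall Y \near X, forall i : 'I_n, `|X 0 i - (Y : 'rV[R]_n) 0 i| < del.
  apply: (@filter_forall _ 'I_n (fun i (Y : 'rV[R]_n) => `|X 0 i - Y 0 i| < del) (nbhs X) _) => i.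
  exact: (@cvgr_dist_lt _ _ _ (nbhs X) _ (fun M : 'rV[R]_n => M 0 i) (X 0 i) (@coord_continuous R 1 n 0 i X) del del0).
apply: filterS => Y HY.
suff Hs : \sum_(i < n) (Y - X) 0 i ^+ 2 < e ^+ 2.
  by rewrite /enorm -(ger0_norm (ltW e0)) -sqrtr_sqr ltr_sqrt ?exprn_gt0.
apply: (@le_lt_trans _ _ (\sum_(i < n) del ^+ 2)).
  apply: ler_sum => i _; rewrite !mxE.
  have := HY i; rewrite ltr_norml => /andP[h1 h2].
  have dd : 0 < del := del0.
  nra.
rewrite sumr_const card_ord -mulr_natl.
have N0 : 0 <= (n%:R : R) by [].
rewrite /del expr_div_n mulrA ltr_pdivrMr; last by rewrite exprn_gt0 // ltr_wpDl.
rewrite mulrC ltr_pM2l; last by rewrite exprn_gt0.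
nra.
Qed.


Lemma enorm0 : enorm (0 : 'rV[R]_n) = 0.
Proof. by rewrite /enorm big1 ?sqrtr0 // => i _; rewrite mxE expr0n. Qed.

Lemma distG_lip (G : set 'rV[R]_n) X Y : (exists y, G y) ->
  distG G X <= enorm (X - Y) + distG G Y.
Proof.
move=> [y0 Gy0].
have hl : forall Z, has_lbound [set enorm (Z - y) | y in G].
  by move=> Z; exists 0 => _ [z _ <-]; exact: enorm_ge0.
have lbX : forall y, G y -> distG G X <= enorm (X - y).
  by move=> y Gy; apply: (ge_inf (hl X)); exists y.
rewrite addrC -lerBlDr; apply: lb_le_inf; first by exists (enorm (Y - y0)), y0.
move=> _ [y Gy <-]; rewrite lerBlDr; apply: le_trans (lbX y Gy) _.
have -> : X - y = (X - Y) + (Y - y) by rewrite addrA subrK.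
by rewrite addrC; apply: enormD.
Qed.
End Alg.

Lemma lt_sub3 (R : realType) (x y z : R) : x + z < y -> 0 < y - x - z.
Proof. move=> h; lra. Qed.

Lemma key_ineq (R : realType) (a DX DY eXq eYq eYX r e : R) : 0 < a -> 0 < e ->
  eYX < e -> eYq <= eYX + eXq -> (1 + a) * DX <= (1 + a) * (eYX + DY) ->
  (3 + a) * e = (1 + a) * DX - eXq - r -> eYq + r < (1 + a) * DY.
Proof. move=> a0 e0 h1 h2 h3 h4; nra. Qed.

Lemma int_le (R : realType) (d' : measure_display) (T : measurableType d')
  (mu : {measure set T -> \bar R}) (D1 D2 : set T) (f1 f2 : T -> \bar R) :
  D1 `<=` D2 -> (forall x, D1 x -> 0 <= f1 x)%E -> (forall x, D2 x -> 0 <= f2 x)%E ->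
  (forall x, D1 x -> f1 x <= f2 x)%E ->
  (\int[mu]_(x in D1) f1 x <= \int[mu]_(x in D2) f2 x)%E.
Proof.
move=> D12 f10 f20 f12; rewrite !ge0_integralE //.
apply: le_ereal_sup => _ [h Hh <-]; exists h => //= x.
apply: le_trans (Hh x) _; rewrite !patchE.
case: ifPn => [/set_mem D1x|_]; first by rewrite mem_set ?f12 //; exact: D12.
case: ifPn => [/set_mem D2x|_] //; exact: f20.
Qed.

Lemma pow_half (R : realType) (l : R) (I : \bar R) : 0 < l -> (0 <= I)%E ->
  (l%:E < poweR I (2^-1)%R)%E <-> ((l ^+ 2)%:E < I)%E.
Proof.
move=> l0; case: I => [r||] //= r0.
- rewrite lee_fin in r0; rewrite !lte_fin powR12_sqrt //.
  have [rp|rn] := ltP 0 r.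
    by rewrite -{1}(ger0_norm (ltW l0)) -sqrtr_sqr ltr_sqrt.
  have -> : r = 0 by apply/eqP; rewrite eq_le rn r0.
  rewrite sqrtr0; split => H; first by move: (lt_trans l0 H); rewrite ltxx.
  by move: H; rewrite ltNge sqr_ge0.
- by rewrite invr_eq0 pnatr_eq0 /= !ltry.
Qed.


Theorem lemma3p6 (R : realType) (n : nat) (d : R)
  (G : set 'rV[R]_n) (mu : {measure set BorelRn R n -> \bar R})
  (alpha alpha' : R) (u : 'rV[R]_n -> R) (g : 'rV[R]_n -> 'rV[R]_n) :
  is_lebesgue_Rn mu ->
  ahlfors_regular d G ->
  d < n%:R - 1 ->
  0 < alpha -> alpha < alpha' ->
  in_Wr mu d G u g ->
  hausdorff d [set q | G q /\ sqfun mu d G g alpha' q = +oo%E] = 0%E ->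
  forall lambda : R, 0 < lambda ->
    exists V : set 'rV[R]_n, open V /\
      [set q | G q /\ (lambda%:E < sqfun mu d G g alpha q)%E] = V `&` G.
Proof.
move=> _ [Gcl _] _ a0 _ _ _ lam lam0.
set a := alpha.
pose F := fun X : 'rV[R]_n =>
  (enorm2 (g X) * powR (distG G X) (1 - d) * wdens d G X)%:E.
have F0 : forall X, (0 <= F X)%E.
  move=> X; rewrite lee_fin; apply: mulr_ge0; last exact: powR_ge0.
  apply: mulr_ge0; last exact: powR_ge0.
  by apply: sumr_ge0 => i _; exact: sqr_ge0.
pose C (q0 : 'rV[R]_n) (k : nat) := [set X : 'rV[R]_n | Omega G X /\
   enorm (X - q0) + (k.+1%:R)^-1 < (1 + a) * distG G X].
pose V := [set x : 'rV[R]_n | exists q0 k, G q0 /\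
   ((lam ^+ 2)%:E < \int[mu]_(X in (C q0 k : set (BorelRn R n))) F X)%E /\
   enorm (x - q0) < (k.+1%:R)^-1].
have kpos : forall k : nat, 0 < (k.+1%:R : R)^-1.
  by move=> k; rewrite invr_gt0 ltr0Sn.
have Csub : forall (q0 : 'rV[R]_n) k (q : 'rV[R]_n), enorm (q - q0) < k.+1%:R^-1 -> C q0 k `<=` cone G a q.
  move=> q0 k q hq X [OX HX]; split => //.
  have : enorm (X - q) <= enorm (X - q0) + enorm (q0 - q).
    have -> : X - q = (X - q0) + (q0 - q) by rewrite addrA subrK.
    exact: enormD.
  rewrite [enorm (q0 - q)]enormB => h.
  by apply: (le_lt_trans h); apply: le_lt_trans HX; rewrite lerD2l ltW.
exists V; split.
  rewrite openE => x [q0 [k [Gq0 [Hint Hx]]]].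
  have gap : 0 < k.+1%:R^-1 - enorm (x - q0) by rewrite subr_gt0.
  rewrite /interior /=; move: (@enorm_near R n x _ gap); apply: filterS => y Hy; exists q0, k; split; first by [].
  split; first by [].
  have := @enormD R n (y - x) (x - q0); rewrite addrA subrK => h.
  by apply: (le_lt_trans h); rewrite -ltrBrDr.
apply/seteqP; split; last first.
  move=> x [[q0 [k [Gq0 [Hint Hx]]]] Gx]; split => //.
  rewrite /sqfun; apply: (@pow_half R lam (\int[mu]_(X in (cone G a x : set (BorelRn R n))) F X) lam0 _).2; first by apply: integral_ge0 => X _; exact: F0.
  apply: lt_le_trans Hint _; apply: int_le.
  - exact: Csub.
  - by move=> X _; exact: F0.
  - by move=> X _; exact: F0.
  - by [].
move=> q [Gq Hq].
have I0 : (0 <= \int[mu]_(X in (cone G a q : set (BorelRn R n))) F X)%E.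
  by apply: integral_ge0 => X _; exact: F0.
have Hl := (@pow_half R lam _ lam0 I0).1 Hq.
suff [k Hk] : exists k, ((lam ^+ 2)%:E < \int[mu]_(X in (C q k : set (BorelRn R n))) F X)%E.
  split => //; exists q, k; split => //; split => //.
  by rewrite subrr enorm0.
have Gne : exists y, G y by exists q.
have Cunion : \bigcup_k C q k = cone G a q.
  apply/seteqP; split.
    move=> X [k _ [OX HX]]; split => //.
    by apply: le_lt_trans HX; rewrite lerDl ltW.
  move=> X [OX HX].
  set gap := (1 + a) * distG G X - enorm (X - q).
  have gap0 : 0 < gap by rewrite subr_gt0.
  exists (Num.trunc gap^-1) => //; split => //.
  have := truncnS_gt gap^-1; set N := (Num.trunc gap^-1).+1%:R => HN.
  have N0 : 0 < N by rewrite ltr0Sn.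
  have : N^-1 < gap.
    rewrite -[gap^-1]mul1r ltr_pdivrMr // in HN.
    by rewrite -[N^-1]mul1r ltr_pdivrMr // mulrC.
  rewrite /gap => h; rewrite [X in X < _]addrC -ltrBrDr; exact: h.
have Copen : forall k, open (C q k).
  move=> k; rewrite openE => X [OX HX].
  set gap := (1 + a) * distG G X - enorm (X - q) - k.+1%:R^-1.
  have gap0 : 0 < gap by exact: lt_sub3.
  have e0 : 0 < gap / (3 + a) by rewrite divr_gt0 // ltr_wpDl.
  have hG : \forall Y \near X, Omega G Y.
    by have := closed_openC Gcl; rewrite openE => /(_ X OX).
  rewrite /interior /=.
  near=> Y.
  split; first by near: Y.
  have hY : enorm (Y - X) < gap / (3 + a) by near: Y; exact: (@enorm_near R n X _ e0).
  have h1 := @distG_lip R n G X Y Gne.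
  have h2 := @enormD R n (Y - X) (X - q); rewrite addrA subrK in h2.
  rewrite [enorm (X - Y)]enormB in h1.
  have a1 : 0 <= 1 + a by rewrite addr_ge0 // ltW.
  have h3 := ler_wpM2l a1 h1.
  have he : (3 + a) * (gap / (3 + a)) = gap by rewrite mulrC divfK // gt_eqF // ltr_wpDl // ltW.
  rewrite {2}/gap in he.
  exact: (@key_ineq R a _ _ _ _ _ _ _ a0 e0 hY h2 h3 he).
have Cm : forall k, measurable (C q k : set (BorelRn R n)).
  by move=> k; apply: sub_sigma_algebra; exact: Copen.
have Cnd : nondecreasing_seq (C q : (set (BorelRn R n))^nat).
  apply/nondecreasing_seqP => k; apply/subsetPset => X [OX HX]; split => //.
  apply: le_lt_trans HX; rewrite lerD2l lef_pV2 ?posrE ?ltr0Sn // ler_nat.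
  by [].
rewrite -Cunion in Hl.
rewrite ge0_integralE in Hl; last by move=> X _; exact: F0.
have [_ [h Hh <-] Hlh] := ereal_sup_gt Hl.
have mh : forall i, measurable_fun (C q i : set (BorelRn R n)) (fun x => (h x)%:E).
  move=> i; change (measurable_fun (C q i : set (BorelRn R n)) (EFin \o h)).
  apply/measurable_EFinP; apply: measurable_funTS; exact: measurable_funPT.
have h0 : forall i x, (C q i : set (BorelRn R n)) x -> (0 <= (fun x => (h x)%:E) x)%E.
  by move=> i x _; rewrite /= lee_fin fun_ge0.
have cv := @ge0_nondecreasing_set_cvg_integral _ (BorelRn R n) R (C q) (fun x => (h x)%:E) mu Cnd Cm mh h0.
have HL : ((lam ^+ 2)%:E < \int[mu]_(x in \bigcup_i (C q i : set (BorelRn R n))) (fun x => (h x)%:E) x)%E.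
  apply: lt_le_trans Hlh _; rewrite ge0_integralE; last by move=> x _; rewrite /= lee_fin fun_ge0.
  apply: ereal_sup_ubound; exists h => //= x; have := Hh x; rewrite !patchE; case: ifPn => //.
have := cv _ (open_ereal_gt' HL).
case=> N _ HN.
have HNN := HN N (leqnn N).
exists N; apply: lt_le_trans HNN _; apply: int_le.
- by [].
- exact: h0.
- by move=> X _; exact: F0.
- move=> x Cx; have := Hh x; rewrite patchE mem_set //; by exists N.
Unshelve. all: end_near.
Qed.
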